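(* Let $(x,y)$ be a random pair with values in $\mathcal{X}\times\{-1,+1\}$ with distribution $P$. Let $\Theta=\{\theta^{(1)},\dots,\theta^{(m)}\}$ be a finite set of hyperparameter values and, for each $k\in[m]$, let $f_{\theta^{(k)}}:\mathcal{X}\times\mathbb{R}\to\mathbb{R}$ satisfy the scalable-classifier assumption. Fix $\varepsilon,\delta\in(0,1)$ and an integer $r\ge1$. Let $\mathcal{Z}_c$ be $n_c\ge r$ i.i.d. samples from $P$, and let $\{\tilde x^U_j\}_{j=1}^{n_U}$ be the feature vectors of all samples in $\mathcal{Z}_c$ with label $-1$. For each $k\in[m]$ and $j\in[n_U]$ let $\bar\rho^{(k)}_j$ be the unique real with $f_{\theta^{(k)}}(\tilde x^U_j,\bar\rho^{(k)}_j)=0$; when $n_U\ge r$ set $\rho^{(k)}_\varepsilon=\max^{(r)}(\{\bar\rho^{(k)}_j\}_{j=1}^{n_U})$ and $\mathcal{S}^{(k)}_\varepsilon=\{x\in\mathcal{X}: f_{\theta^{(k)}}(x,\rho^{(k)}_\varepsilon)<0\}$, and set $\mathcal{S}^{(k)}_\varepsilon=\mathcal{X}$ if $n_U<r$. Then for every $k\in[m]$, $$\Pr_{\mathcal{Z}_c}\Big\{\Pr_{(x,y)\sim P}\{y=-1\ \text{and}\ x\in\mathcal{S}^{(k)}_\varepsilon\}\le\varepsilon\Big\}\ge 1-m\,\mathbf{B}(r-1;n_c,\varepsilon),$$ where $(x,y)$ is independent of $\mathcal{Z}_c$.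
   Context: Scalable-classifier assumption for $f_\theta$: for every $x\in\mathcal{X}$, the map $\rho\mapsto f_\theta(x,\rho)$ is continuous and strictly increasing, and $\lim_{\rho\to-\infty}f_\theta(x,\rho)<0<\lim_{\rho\to+\infty}f_\theta(x,\rho)$. $[m]=\{1,\dots,m\}$. Binomial CDF: $\mathbf{B}(k;n,\varepsilon)=\sum_{i=0}^{k}\binom{n}{i}\varepsilon^i(1-\varepsilon)^{n-i}$. Generalized max: for a finite collection $\Gamma=\{\gamma_i\}_{i=1}^n$ of reals and integer $r\in\{1,\dots,n\}$, order it as $\gamma_{(1)}\ge\dots\ge\gamma_{(n)}$ and set $\max^{(r)}(\Gamma)=\gamma_{(r)}$. *)

(* Defs.v *)
From HB Require Import structures.
From mathcomp Require Import all_boot all_order all_algebra.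
From mathcomp Require Import all_classical all_reals all_analysis.
Set Implicit Arguments. Unset Strict Implicit. Unset Printing Implicit Defensive.
Import Order.TTheory GRing.Theory Num.Theory.
Import numFieldNormedType.Exports.
Local Open Scope ring_scope.
Local Open Scope classical_set_scope.

(* Labels: [true] stands for +1, [false] stands for -1. *)

Definition scalable_classifier (R : realType) (X : Type) (g : X -> R -> R) : Prop :=
  forall x : X,
    continuous (g x) /\
    {homo g x : a b / a < b} /\
    (lim ((g x rho)%:E @[rho --> -oo%R]) < 0)%E /\
    (0 < lim ((g x rho)%:E @[rho --> +oo%R]))%E.

Definition rhobar (R : realType) (X : Type) (g : X -> R -> R) (x : X) : R :=
  xget 0 [set rho | g x rho = 0].

Definition binomCDF (R : realType) (k n : nat) (eps : R) : R :=
  \sum_(i < k.+1) ('C(n, i))%:R * eps ^+ i * (1 - eps) ^+ (n - i).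

Definition genmax (R : realType) (r : nat) (s : seq R) : R :=
  nth 0 (sort (fun a b => b <= a) s) r.-1.

Definition neg_features (X : Type) (n : nat) (z : 'I_n -> X * bool) : seq X :=
  [seq (z i).1 | i <- enum 'I_n & ~~ (z i).2].

Definition S_eps (R : realType) (X : Type) (g : X -> R -> R) (r n : nat)
  (z : 'I_n -> X * bool) : set X :=
  let s := neg_features z in
  if (r <= size s)%N then [set x | g x (genmax r [seq rhobar g xu | xu <- s]) < 0]
  else setT.

Definition iid_with_law (R : realType) (dO dZ : measure_display)
  (Omega : measurableType dO) (Zt : measurableType dZ)
  (Q : probability Omega R) (P : probability Zt R) (n : nat)
  (Z : 'I_n -> Omega -> Zt) : Prop :=
  (forall i, measurable_fun setT (Z i)) /\
  (forall i A, measurable A -> Q (Z i @^-1` A) = P A) /\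
  (forall A : 'I_n -> set Zt, (forall i, measurable (A i)) ->
     Q (\bigcap_(i in [set: 'I_n]) (Z i @^-1` A i)) = (\prod_(i < n) Q (Z i @^-1` A i))%E).

(* Main.v *)
Require Import Defs.
From HB Require Import structures.
From mathcomp Require Import all_boot all_order all_algebra.
From mathcomp Require Import all_classical all_reals all_analysis.
From mathcomp Require Import ring lra.
Import Order.TTheory GRing.Theory Num.Theory.
Import numFieldNormedType.Exports.
Local Open Scope ring_scope.
Local Open Scope classical_set_scope.

Set Implicit Arguments.
Section Alg.
Variable R : realType.

Definition bterm (p : R) (n i : nat) : R := ('C(n, i))%:R * p ^+ i * (1 - p) ^+ (n - i).
Definition Bm (p : R) (k n : nat) : R := \sum_(i < k) bterm p n i.

Lemma bterm_ge0 p n i : 0 <= p <= 1 -> 0 <= bterm p n i.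
Proof.
move=> /andP[p0 p1]; rewrite /bterm; apply: mulr_ge0; first apply: mulr_ge0.
- exact: ler0n.
- exact: exprn_ge0.
- by apply: exprn_ge0; rewrite subr_ge0.
Qed.

Lemma bterm0S p n : bterm p n.+1 0 = (1 - p) * bterm p n 0.
Proof. by rewrite /bterm !bin0 !subn0 exprS; ring. Qed.

Lemma btermSS p n i : bterm p n.+1 i.+1 = (1 - p) * bterm p n i.+1 + p * bterm p n i.
Proof.
rewrite /bterm binS natrD subSS [in LHS]mulrDl [in LHS]mulrDl.
have -> : ('C(n, i.+1))%:R * p ^+ i.+1 * (1 - p) ^+ (n - i) =
          (1 - p) * (('C(n, i.+1))%:R * p ^+ i.+1 * (1 - p) ^+ (n - i.+1)) :> R.
  case: (ltnP i n) => hin.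
    rewrite -subnSK // !exprS.
    move: (p ^+ i) ((1 - p) ^+ (n - i.+1)) ('C(n, i.+1))%:R => a b c; ring.
  by rewrite bin_small ?ltnS // !mul0r mulr0.
rewrite [p ^+ i.+1]exprS.
move: (p ^+ i) ((1 - p) ^+ (n - i.+1)) ((1 - p) ^+ (n - i)) ('C(n, i.+1))%:R ('C(n, i))%:R => a b c d e; ring.
Qed.

Lemma BmS p k n : Bm p k.+1 n = Bm p k n + bterm p n k.
Proof. by rewrite /Bm big_ord_recr. Qed.

Lemma Bm_rec p k n : Bm p k.+1 n.+1 = (1 - p) * Bm p k.+1 n + p * Bm p k n.
Proof.
elim: k => [|k IH].
  by rewrite /Bm !big_ord1 big_ord0 bterm0S mulr0 addr0.
rewrite BmS IH btermSS (BmS p k.+1 n) (BmS p k n).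
ring.
Qed.

Lemma Bm_mono p q k n : 0 <= q -> q <= p -> p <= 1 -> Bm p k n <= Bm q k n.
Proof.
move=> q0 qp p1.
elim: n k => [|n IH] k.
  rewrite /Bm le_eqVlt; apply/orP; left; apply/eqP; apply: eq_bigr => -[[|i] hi] _.
    by rewrite /bterm.
  by rewrite /bterm bin_small // !mul0r.
case: k => [|k]; first by rewrite /Bm !big_ord0.
rewrite !Bm_rec.
have h1 := IH k.+1; have h2 := IH k.
have h3 : Bm q k n <= Bm q k.+1 n.
  rewrite /Bm big_ord_recr /= lerDl; apply: bterm_ge0.
  by rewrite q0 (le_trans qp p1).
nra.
Qed.

Lemma binomCDF_Bm p r nc : (1 <= r)%N -> binomCDF r.-1 nc p = Bm p r nc.
Proof. by case: r => // r _. Qed.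

Lemma sum_sets_Bm p n r :
  \sum_(I : {set 'I_n} | (#|I| < r)%N) p ^+ #|I| * (1 - p) ^+ (n - #|I|) = Bm p r n.
Proof.
case: r => [|r]; first by rewrite /Bm big_ord0 big_pred0.
rewrite (partition_big (fun I : {set 'I_n} => (inord #|I| : 'I_r.+1)) xpredT) //=.
rewrite /Bm; apply: eq_bigr => j _.
rewrite (eq_bigl (fun I : {set 'I_n} => #|I| == j)); last first.
  move=> I /=; apply/andP/eqP.
    move=> [hI /eqP <-]; by rewrite inordK.
  move=> hI; split; first by rewrite hI ltn_ord.
  by apply/eqP/val_inj; rewrite /= hI inordK // ltn_ord.
rewrite (eq_bigr (fun _ => p ^+ j * (1 - p) ^+ (n - j))); last by move=> I /eqP ->.
rewrite sumr_const.
have -> : #|[pred I : {set 'I_n} | #|I| == j]| = 'C(n, j).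
  by rewrite -cardsE card_draws card_ord.
rewrite /bterm -[LHS]mulr_natl; move: (p ^+ j) ((1 - p) ^+ (n - j)) => a b; ring.
Qed.

Lemma sorted_ge_nth (c : R) (t : seq R) i :
  sorted (fun a b => b <= a) t -> (i < size t)%N ->
  (c <= nth 0 t i) = (i < count (fun a : R => (c <= a)%R) t)%N.
Proof.
elim: t i => [//|a t IH] i /= st hi.
have tr : transitive (fun a b : R => b <= a) by move=> y x z h1 h2; exact: le_trans h2 h1.
have allle := order_path_min tr st.
have st' := path_sorted st.
case: (leP c a) => ca.
  case: i hi => [|i] hi //=.
  by rewrite IH // add1n ltnS.
have c0 : count (fun b => c <= b) t = 0%N.
  apply/eqP; rewrite -leqn0 leqNgt -has_count; apply/hasPn => b bt.
  move/allP: allle => /(_ b bt) /= ba; rewrite -ltNge; exact: le_lt_trans ba ca.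
rewrite c0 add0n; case: i hi => [|i] hi /=.
  by apply/negbTE; rewrite -ltNge.
apply/negbTE; rewrite -ltNge.
move/allP: allle => /(_ (nth 0 t i)) /= h; apply: le_lt_trans (h _) ca.
by apply: mem_nth; rewrite -ltnS.
Qed.

Lemma genmax_ge (c : R) r (s : seq R) : (1 <= r)%N -> (r <= size s)%N ->
  (c <= genmax r s) = (r <= count (fun a : R => (c <= a)%R) s)%N.
Proof.
move=> r1 rs; rewrite /genmax sorted_ge_nth.
- by rewrite count_sort prednK.
- by apply: sort_sorted => a b; exact: le_total.
- by rewrite size_sort prednK.
Qed.

End Alg.

Lemma root_ex (R : realType) (g : R -> R) : continuous g -> {homo g : a b / a < b} ->
  (lim ((g rho)%:E @[rho --> -oo%R]) < 0)%E ->
  (0 < lim ((g rho)%:E @[rho --> +oo%R]))%E -> exists c, g c = 0.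
Proof.
move=> cg hg lm lp.
have [a ga] : exists a, g a < 0.
  apply: contrapT => H.
  have H' : forall a, 0 <= g a.
    by move=> a; rewrite leNgt; apply/negP => ?; apply: H; exists a.
  have cv : cvg ((g rho)%:E @[rho --> -oo%R]).
    apply/cvg_ex; exists (ereal_inf (range (fun r => (g (- r))%:E))).
    apply/cvgNy_compNP; apply: nonincreasing_cvge => x y xy /=.
    by rewrite lee_fin; apply: (ltW_homo hg); rewrite lerN2.
  have : (0 <= lim ((g rho)%:E @[rho --> -oo%R]))%E.
    by apply: lime_ge cv _; apply: nearW => r; rewrite lee_fin.
  by rewrite leNgt lm.
have [b gb] : exists b, 0 < g b.
  apply: contrapT => H.
  have H' : forall a', g a' <= 0.
    by move=> a'; rewrite leNgt; apply/negP => ?; apply: H; exists a'.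
  have cv : cvg ((g rho)%:E @[rho --> +oo%R]).
    apply/cvg_ex; exists (ereal_sup (range (fun r => (g r)%:E))).
    apply: nondecreasing_cvge => x y xy /=.
    by rewrite lee_fin; apply: (ltW_homo hg).
  have : (lim ((g rho)%:E @[rho --> +oo%R]) <= 0)%E.
    by apply: lime_le cv _; apply: nearW => r; rewrite lee_fin.
  by rewrite leNgt lp.
have ab : a <= b.
  rewrite leNgt; apply/negP => ba; have := hg _ _ ba; lra.
have hv : Num.min (g a) (g b) <= 0 <= Num.max (g a) (g b).
  rewrite ge_min le_max; apply/andP; split; apply/orP; [left|right]; lra.
have [c _ gc] := @IVT R g a b 0 ab (continuous_subspaceT cg) hv.
by exists c.
Qed.


Lemma rhobarP (R : realType) (X : Type) (g : X -> R -> R) :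
  scalable_classifier g -> forall x rho, (g x rho < 0) = (rho < rhobar g x).
Proof.
move=> sc x rho; have [cg [hg [lm lp]]] := sc x.
have ex := @root_ex R (g x) cg hg lm lp.
have h0 : g x (rhobar g x) = 0 by rewrite /rhobar; exact: (xgetPex 0 ex).
by rewrite -[in LHS]h0 (leW_mono (le_mono hg)).
Qed.

Lemma count_prob (R : realType) (dO dZ : measure_display) (Omega : measurableType dO)
  (Zt : measurableType dZ) (Q : probability Omega R) (P : probability Zt R) (n : nat)
  (Z : 'I_n -> Omega -> Zt) (E : set Zt) (r : nat) :
  measurable E -> iid_with_law Q P Z ->
  measurable [set w | (#|[set j : 'I_n | Z j w \in E]%SET| < r)%N] /\
  Q [set w | (#|[set j : 'I_n | Z j w \in E]%SET| < r)%N] =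
  (\sum_(I : {set 'I_n} | (#|I| < r)%N)
      fine (P E) ^+ #|I| * (1 - fine (P E)) ^+ (n - #|I|))%:E.
Proof.
move=> mE [mZ [lawZ indep]].
set p := fine (P E).
have PE : P E = p%:E by rewrite /p fineK // fin_num_measure.
have PC : P (~` E) = (1 - p)%:E by rewrite probability_setC // PE.
pose A (I : {set 'I_n}) (i : 'I_n) := if i \in I then E else ~` E.
have mA : forall I i, measurable (A I i).
  by move=> I i; rewrite /A; case: ifP => _ //; exact: measurableC.
pose Ev (I : {set 'I_n}) := [set w | [set j : 'I_n | Z j w \in E]%SET = I].
have EvE : forall I, Ev I = \bigcap_(i in [set: 'I_n]) Z i @^-1` A I i.
  move=> I; apply/seteqP; split => w /=.
    move=> <- i _ /=; rewrite /A inE; case: ifP => [|h]; first by rewrite inE.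
    by move=> hE; rewrite (mem_set hE) in h.
  move=> H; rewrite /Ev /=; apply/setP => i; rewrite inE.
  have := H i Logic.I; rewrite /A /=; case: ifP => iI.
    by move=> /mem_set ->.
  by move=> nE; apply/negbTE/negP => /set_mem.
have mEv : forall I, measurable (Ev I).
  move=> I; rewrite EvE; apply: fin_bigcap_measurable; first exact: finite_finset.
  move=> i _; have := mZ i measurableT (A I i) (mA I i); by rewrite setTI.
have QEv : forall I, Q (Ev I) = (p ^+ #|I| * (1 - p) ^+ (n - #|I|))%:E.
  move=> I; rewrite EvE indep //.
  rewrite (eq_bigr (fun i => (if i \in I then p else 1 - p)%:E)); last first.
    by move=> i _; rewrite lawZ // /A; case: ifP.
  rewrite prodEFin; congr EFin.
  rewrite (bigID (mem I)) /=.
  rewrite (eq_bigr (fun _ => p)); last by move=> i ->.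
  rewrite [X in _ * X](eq_bigr (fun _ => 1 - p)); last by move=> i /negbTE ->.
  rewrite !prodr_const; congr (_ * _ ^+ _).
  transitivity #|~: I|; last by rewrite cardsCs finset.setCK card_ord.
  by rewrite -cardsE; congr #|_|; apply/setP => i; rewrite !inE.
have -> : [set w | (#|[set j : 'I_n | Z j w \in E]%SET| < r)%N] =
    \bigcup_(I in [set: {set 'I_n}]) (if (#|I| < r)%N then Ev I else set0).
  apply/seteqP; split => w /=.
    move=> h; exists [set j : 'I_n | Z j w \in E]%SET => //.
    by rewrite h.
  by move=> [I _]; case: ifP => // hI; rewrite /Ev /= => ->.
split.
  apply: fin_bigcup_measurable; first exact: finite_finset.
  by move=> I _; case: ifP => _ //; exact: mEv.
rewrite measure_fin_bigcup //; last 2 first.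
- move=> I J _ _ [w []]; case: ifP => // _; case: ifP => // _.
  by rewrite /Ev /= => -> ->.
- by move=> I _; case: ifP => // _; exact: mEv.
rewrite (fsbigE (enum {set 'I_n})) //; last first.
- by move=> I _; rewrite mem_enum.
- exact: enum_uniq.
rewrite big_enum_cond /= big_mkcond /= -sumEFin [in RHS]big_mkcond /=.
apply: eq_bigr => I _; rewrite in_setT /=.
by case: ifP => _; rewrite ?QEv ?measure0.
exact: finite_finset.
Qed.

Lemma count_neg (R : realType) (X : Type) (n : nat) (z : 'I_n -> X * bool) (h : X -> R) (c : R)
  (E : set (X * bool)) : (forall xy, E xy <-> (xy.2 = false /\ c <= h xy.1)) ->
  count (fun a : R => (c <= a)%R) [seq h xu | xu <- neg_features z] =
  #|[set j : 'I_n | z j \in E]%SET|.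
Proof.
move=> hE.
rewrite /neg_features !count_map count_filter cardsE cardE /enum_mem size_filter.
rewrite count_filter; apply: eq_count => i /=; rewrite andbT; apply/idP/idP.
  move/andP=> [ci ni]; rewrite inE; apply/hE; split => //; by move/negbTE: ni.
by rewrite inE => /hE [-> ci]; rewrite ci.
Qed.

Theorem theorem2 (R : realType) (dX dO : measure_display)
  (X : measurableType dX) (Omega : measurableType dO)
  (P : probability (X * bool)%type R) (m : nat) (f : 'I_m -> X -> R -> R)
  (eps : R) (r nc : nat) (Q : probability Omega R)
  (Z : 'I_nc -> Omega -> (X * bool)%type) :
  (forall k, scalable_classifier (f k)) ->
  (forall k rho, measurable_fun setT (fun x => f k x rho)) ->
  0 < eps < 1 ->
  (1 <= r)%N -> (r <= nc)%N ->
  iid_with_law Q P Z ->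
  forall k : 'I_m,
    ((1 - m%:R * binomCDF r.-1 nc eps)%:E <=
     Q [set w | P [set xy | xy.2 = false /\ S_eps (f k) r (fun i => Z i w) xy.1]
                <= eps%:E])%E.
Proof.
move=> sc fm /andP[e0 e1] r1 rnc iid k.
have hg := rhobarP (sc k).
set g := f k in hg *.
set h := rhobar g in hg.
pose A (rho : R) : set (X * bool) := [set xy | xy.2 = false /\ rho < h xy.1].
pose A0 : set (X * bool) := [set xy | xy.2 = false].
have mA0 : measurable A0.
  have hf : measurable [set false] by [].
  have := @measurable_snd _ _ X bool measurableT [set false] hf.
  by rewrite setTI.
have mA : forall rho, measurable (A rho).
  move=> rho.
  have m2 : measurable ((fun xy : X * bool => g xy.1 rho) @^-1` `]-oo, 0[).
    have mc : measurable_fun setT (fun xy : X * bool => g xy.1 rho).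
      exact: measurableT_comp (fm k rho) measurable_fst.
    by have := mc measurableT _ (measurable_itv `]-oo, 0[%R); rewrite setTI.
  have -> : A rho = A0 `&` (fun xy : X * bool => g xy.1 rho) @^-1` `]-oo, 0[.
    apply/seteqP; split => xy /=; rewrite /A /A0 /= in_itv /= hg //.
  exact: measurableI.
have AA0 : forall rho, A rho `<=` A0 by move=> rho xy [].
have Amono : forall a b, a <= b -> (P (A b) <= P (A a))%E.
  move=> a b ab; apply: le_measure; rewrite ?inE //.
  by move=> xy [H bh]; split => //; exact: le_lt_trans ab bh.
have Bge0 : 0 <= binomCDF r.-1 nc eps.
  rewrite binomCDF_Bm // /Bm; apply: sumr_ge0 => i _; apply: bterm_ge0.
  by rewrite (ltW e0) (ltW e1).
have mB : binomCDF r.-1 nc eps <= m%:R * binomCDF r.-1 nc eps.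
  have m1 : (0 < m)%N := leq_ltn_trans (leq0n _) (ltn_ord k).
  by rewrite ler_peMl // ler1n.
have Sred : forall w, [set xy | xy.2 = false /\ S_eps g r (fun i => Z i w) xy.1] =
    if (r <= size (neg_features (fun i => Z i w)))%N
    then A (genmax r [seq h xu | xu <- neg_features (fun i => Z i w)]) else A0.
  move=> w; rewrite /S_eps /=; case: ifP => _; apply/seteqP; split => xy /=.
  - by move=> [H1 H2]; rewrite /A /=; split => //; rewrite -hg.
  - by rewrite /A /= => -[H1 H2]; split => //; rewrite hg.
  - by case.
  - by move=> ->.
have Gset : [set w | (P [set xy | xy.2 = false /\ S_eps g r (fun i => Z i w) xy.1] <= eps%:E)%E] =
    [set w | (P (if (r <= size (neg_features (fun i => Z i w)))%N
    then A (genmax r [seq h xu | xu <- neg_features (fun i => Z i w)]) else A0) <= eps%:E)%E].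
  by apply/seteqP; split => w /=; rewrite Sred.
rewrite Gset.
have [[rho0 Hrho0]|Te] := pselect (exists rho, (eps%:E < P (A rho))%E); last first.
  have Te' : forall rho, (P (A rho) <= eps%:E)%E.
    by move=> rho; rewrite leNgt; apply/negP => H; apply: Te; exists rho.
  have PA0 : (P A0 <= eps%:E)%E.
    have U : A0 = \bigcup_n A (- n%:R).
      apply/seteqP; split => xy.
        move=> H; exists (Num.Def.archi_bound `|h xy.1|) => //; split => //.
        rewrite ltrNl; apply: le_lt_trans (archi_boundP (normr_ge0 _)).
        by rewrite -normrN ler_norm.
      by move=> [n _] [].
    have hom : {homo (fun n => A (- n%:R)) : n m / (n <= m)%N >-> (n <= m)%O}.
      move=> a b ab; apply/subsetPset => xy [H1 H2]; split => //; apply: le_lt_trans H2.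
      by rewrite lerN2 ler_nat.
    have mU : measurable (\bigcup_n A (- n%:R)) by rewrite -U.
    have cv := nondecreasing_cvg_mu (mu:=P) (fun n => mA _) mU hom.
    rewrite U -(cvg_lim _ cv) //; apply: lime_le; first exact: cvgP cv.
    by apply: nearW => n; exact: Te'.
  have -> : [set w | (P (if (r <= size (neg_features (fun i => Z i w)))%N
    then A (genmax r [seq h xu | xu <- neg_features (fun i => Z i w)]) else A0) <= eps%:E)%E] = setT.
    by apply/seteqP; split => // w _ /=; case: ifP => _; [exact: Te'|exact: PA0].
  rewrite probability_setT lee_fin; lra.
pose T := [set rho | (eps%:E < P (A rho))%E].
have [rho1 H1] : exists rho1, (P (A rho1) <= eps%:E)%E.
  apply: contrapT => H.
  have H' : forall rho, (eps%:E < P (A rho))%E.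
    by move=> rho; rewrite ltNge; apply/negP => h'; apply: H; exists rho.
  have I0 : \bigcap_n A n%:R = set0.
    apply/seteqP; split => [xy Hx|//].
    have [_ hlt] := Hx (Num.Def.archi_bound `|h xy.1|) I.
    have := archi_boundP (normr_ge0 (h xy.1)); have := ler_norm (h xy.1).
    by move: hlt; set u := ((Num.Def.archi_bound _)%:R); lra.
  have hom : {homo (fun n => A n%:R) : n m / (n <= m)%N >-> (m <= n)%O}.
    move=> a b ab; apply/subsetPset => xy [H2 H3]; split => //; apply: le_lt_trans H3.
    by rewrite ler_nat.
  have mI : measurable (\bigcap_n A n%:R) by rewrite I0.
  have fin : (P (A 0%:R) < +oo)%E.
    by apply: le_lt_trans (probability_le1 _ (mA _)) _; rewrite ltry.
  have cv := nonincreasing_cvg_mu fin (fun n => mA _) mI hom.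
  have : (eps%:E <= lim ((P \o (fun n => A n%:R)) x @[x --> \oo]))%E.
    apply: lime_ge; first exact: cvgP cv.
    by apply: nearW => n; apply/ltW/H'.
  by rewrite (cvg_lim _ cv) // I0 measure0 lee_fin; lra.
have Tub : forall t, T t -> t <= rho1.
  move=> t Tt; rewrite leNgt; apply/negP => lt.
  have := lt_le_trans Tt (le_trans (Amono _ _ (ltW lt)) H1); by rewrite ltxx.
have hsT : has_sup T by split; [exists rho0 | exists rho1].
set c := sup T.
have above : forall rho, c < rho -> (P (A rho) <= eps%:E)%E.
  move=> rho crho; rewrite leNgt; apply/negP => Trho.
  have := sup_upper_bound hsT Trho; by rewrite -/c leNgt crho.
have below : forall rho, rho < c -> (eps%:E < P (A rho))%E.
  move=> rho rc.
  have cr : 0 < c - rho by rewrite subr_gt0.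
  have [t Tt lt] := sup_adherent cr hsT.
  have rt : rho < t by move: lt; rewrite -/c; lra.
  exact: lt_le_trans Tt (Amono _ _ (ltW rt)).
have ip : forall n : nat, 0 < n.+1%:R^-1 :> R by move=> n; rewrite invr_gt0 ltr0Sn.
have invhom : forall a b : nat, (a <= b)%N -> b.+1%:R^-1 <= a.+1%:R^-1 :> R.
  by move=> a b ab; rewrite lef_pV2 ?posrE ?ltr0Sn // ler_nat ltnS.
have PAc : (P (A c) <= eps%:E)%E.
  have U : A c = \bigcup_n A (c + n.+1%:R^-1).
    apply/seteqP; split => xy.
      move=> [H2 H3]; have [n hn] := ltr_add_invr H3; by exists n.
    move=> [n _ [H2 H3]]; split => //; apply: lt_trans H3.
    by rewrite ltrDl.
  have hom : {homo (fun n => A (c + n.+1%:R^-1)) : n m / (n <= m)%N >-> (n <= m)%O}.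
    move=> a b ab; apply/subsetPset => xy [H2 H3]; split => //; apply: le_lt_trans H3.
    by rewrite lerD2l; apply: invhom.
  have mU : measurable (\bigcup_n A (c + n.+1%:R^-1)) by rewrite -U.
  have cv := nondecreasing_cvg_mu (mu:=P) (fun n => mA _) mU hom.
  rewrite U -(cvg_lim _ cv) //; apply: lime_le; first exact: cvgP cv.
  by apply: nearW => n; apply: above; rewrite ltrDl.
pose E := [set xy : X * bool | xy.2 = false /\ c <= h xy.1].
have EI : E = \bigcap_n A (c - n.+1%:R^-1).
  apply/seteqP; split => xy.
    move=> [H2 H3] n _; split => //; have := ip n; move: H3; set u := _^-1; lra.
  move=> H; split; first by have [] := H 0%N I.
  rewrite leNgt; apply/negP => hc; have [n hn] := ltr_add_invr hc.
  have [_ ] := H n I; move: hn; set u := _^-1; lra.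
have mE : measurable E by rewrite EI; apply: bigcapT_measurable => n; exact: mA.
have PEge : (eps%:E <= P E)%E.
  have hom : {homo (fun n => A (c - n.+1%:R^-1)) : n m / (n <= m)%N >-> (m <= n)%O}.
    move=> a b ab; apply/subsetPset => xy [H2 H3]; split => //; apply: le_lt_trans H3.
    by rewrite lerD2l lerN2; apply: invhom.
  have mI : measurable (\bigcap_n A (c - n.+1%:R^-1)) by rewrite -EI.
  have fin : (P (A (c - 0.+1%:R^-1)%R) < +oo)%E.
    by apply: le_lt_trans (probability_le1 _ (mA _)) _; rewrite ltry.
  have cv := nonincreasing_cvg_mu fin (fun n => mA _) mI hom.
  rewrite EI -(cvg_lim _ cv) //; apply: lime_ge; first exact: cvgP cv.
  by apply: nearW => n; apply/ltW/below; have := ip n; set u := _^-1; lra.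
set p := fine (P E).
have pE : P E = p%:E by rewrite /p fineK // fin_num_measure.
have ep : eps <= p by rewrite -lee_fin -pE.
have p1 : p <= 1 by rewrite -lee_fin -pE probability_le1.
have [mS QS] := count_prob E r mE iid.
have -> : [set w | (P (if (r <= size (neg_features (fun i => Z i w)))%N
    then A (genmax r [seq h xu | xu <- neg_features (fun i => Z i w)]) else A0) <= eps%:E)%E] =
    ~` [set w | (#|[set j : 'I_nc | Z j w \in E]%SET| < r)%N].
  apply/seteqP; split => w /=.
  - have cnt := @count_neg R X nc (fun i => Z i w) h c E (fun xy => conj (fun x => x) (fun x => x)).
    case: ifP => hs.
      have hs' : (r <= size [seq h xu | xu <- neg_features (fun i => Z i w)])%N by rewrite size_map hs.
      move=> H; apply/negP; rewrite -leqNgt -cnt -genmax_ge //.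
      rewrite leNgt; apply/negP => gc; have := below _ gc; by rewrite ltNge H.
    move=> H; exfalso.
    have le0 := le_measure P (mem_set (mA rho0)) (mem_set mA0) (AA0 rho0).
    by have := lt_le_trans Hrho0 (le_trans le0 H); rewrite ltxx.
  - have cnt := @count_neg R X nc (fun i => Z i w) h c E (fun xy => conj (fun x => x) (fun x => x)).
    case: ifP => hs H.
      have hs' : (r <= size [seq h xu | xu <- neg_features (fun i => Z i w)])%N by rewrite size_map hs.
      have cg : c <= genmax r [seq h xu | xu <- neg_features (fun i => Z i w)].
        by rewrite genmax_ge // cnt leqNgt; apply/negP.
      exact: le_trans (Amono _ _ cg) PAc.
    exfalso; apply: H; rewrite -cnt; apply: leq_ltn_trans (count_size _ _) _.
    by rewrite size_map ltnNge hs.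
rewrite probability_setC // QS sum_sets_Bm -EFinB lee_fin.
rewrite binomCDF_Bm // in mB Bge0 *.
have := @Bm_mono R p eps r nc (ltW e0) ep p1.
lra.
Qed.
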